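(* Consider the hypercube-based interactive proof of knowledge for the Rank Syndrome Decoding relation described in the context. If the prover knows $\mathbf{x}\in\mathbb{F}_{q^m}^n$ with $\mathbf{H}\mathbf{x}=\mathbf{y}$ and $W_R(\mathbf{x})\le r$ and executes the protocol correctly, then the verifier accepts with probability $1$ (the protocol is perfectly complete).
   Context: Let $q$ be a prime power, $m,n,k,r,\eta$ positive integers, $\mathbb{F}_{q^m}$ the field with $q^m$ elements and $\mathbb{F}_{q^{m\eta}}$ its degree-$\eta$ extension. For $\mathbf{x}=(x_1,\dots,x_n)\in\mathbb{F}_{q^m}^n$, its rank weight $W_R(\mathbf{x})$ is the dimension of the $\mathbb{F}_q$-span $U=\langle x_1,\dots,x_n\rangle$. A Rank-SD instance is $\mathbf{H}=(\mathbf{I}_{n-k}\,\|\,\mathbf{H}')\in\mathbb{F}_{q^m}^{(n-k)\times n}$, $\mathbf{y}\in\mathbb{F}_{q^m}^{n-k}$; a witness is $\mathbf{x}$ with $\mathbf{H}\mathbf{x}=\mathbf{y}$ and $W_R(\mathbf{x})\le r$. Writing $\mathbf{x}=(\mathbf{x}_A\|\mathbf{x}_B)$ with $\mathbf{x}_A\in\mathbb{F}_{q^m}^{n-k}$, one has $\mathbf{x}_A=\mathbf{y}-\mathbf{H}'\mathbf{x}_B$. Assuming $1\in U$ and $\dim U=r$, the annihilator polynomial $L(X)=\prod_{u\in U}(X-u)$ can be written $L(X)=(X^{q^r}-X)+\sum_{i=1}^{r-1}\beta_i(X^{q^i}-X)$, $\boldsymbol\beta=(\beta_1,\dots,\beta_{r-1})$.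 MPC protocol $\Pi^\eta$ (on linear sharings $[\![\cdot]\!]$): inputs are sharings of $\mathbf{x}_B$, $\boldsymbol\beta$, a uniformly random $\mathbf{a}\in\mathbb{F}_{q^{m\eta}}^{r-1}$ and $c=-\langle\boldsymbol\beta,\mathbf{a}\rangle$. Given public random $\gamma_1,\dots,\gamma_n,\varepsilon\in\mathbb{F}_{q^{m\eta}}$, parties compute $[\![\mathbf{x}_A]\!]=\mathbf{y}-\mathbf{H}'[\![\mathbf{x}_B]\!]$, $[\![z]\!]=-\sum_j\gamma_j([\![x_j]\!]^{q^r}-[\![x_j]\!])$, $[\![\omega_i]\!]=\sum_j\gamma_j([\![x_j]\!]^{q^i}-[\![x_j]\!])$ for $1\le i\le r-1$, open $\boldsymbol\alpha=\varepsilon\boldsymbol\omega+\mathbf{a}$, compute and open $v=\varepsilon z-\langle\boldsymbol\alpha,\boldsymbol\beta\rangle-c$, and accept iff $v=0$. Hypercube protocol: $N=2^D$ leaf parties indexed by $(i_1,\dots,i_D)\in\{1,2\}^D$. The prover additively shares $\mathbf{x}_B,\boldsymbol\beta,\mathbf{a},c$ among the leaves (leaf shares derived from seeds of a GGM tree, the last leaf's shares of $\mathbf{x}_B,\boldsymbol\beta,c$ being corrected so the sums are correct), commits each leaf state with a commitment scheme, and sends $h_0$, a hash of all leaf commitments. The verifier sends $((\gamma_j)_j,\varepsilon)$ uniform in $\mathbb{F}_{q^{m\eta}}^{n+1}$. For each dimension $d\in\{1,\dots,D\}$, the two main parties $(d,1),(d,2)$ hold the sums of the leaf shares with $i_d=1$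 (resp. $2$); the prover runs $\Pi^\eta$ on them, obtaining shares of $\boldsymbol\alpha$ and $v$, sets $H_d$ = hash of these shares, and sends $h_1=\mathrm{Hash}(H_1,\dots,H_D)$. The verifier sends $i^*$ uniform in $\{1,\dots,N\}$. The prover reveals the states of all leaves except $i^*$ (via GGM sibling path and, if $i^*\ne N$, the correction shares of leaf $N$), the commitment of leaf $i^*$, and the share of $\boldsymbol\alpha$ of leaf $i^*$. The verifier recomputes $h_0$, recomputes each dimension's execution (setting the share of the main party containing $i^*$ so that $v=0$), and accepts iff $\boldsymbol\alpha$ is the same for all $D$ executions and the recomputed $h_0,h_1$ match. *)

(* Defs.v *)
From HB Require Import structures.
From mathcomp Require Import all_boot all_order all_algebra all_field.
Set Implicit Arguments. Unset Strict Implicit. Unset Printing Implicit Defensive.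
Import Order.TTheory GRing.Theory Num.Theory.
Local Open Scope ring_scope.

(*  - E : fieldExtType F0, playing F_{q^{m eta}}; F_{q^m} is a subfield K.  *)
(*  - n = nk + k, nk = n - k.  Vectors are column vectors 'cV_n.            *)
(*  - Leaves of the hypercube are D.-tuples of booleans; false <-> index 1, *)
(*    true <-> index 2.  The "last" leaf N is (2,...,2) = all true; the     *)
(*    leaf (1,...,1) = all false adds the public constants (y), so that the *)
(*    main party (d,1) adds them in every dimension.                        *)

Section RankSD.
Variables (F0 : finFieldType) (E : fieldExtType F0).

Definition fq : nat := #|F0|.

Definition supp_space n (x : 'cV[E]_n) : {vspace E} :=
  span [seq x i ord0 | i <- enum 'I_n].
Definition rank_weight n (x : 'cV[E]_n) : nat := \dim (supp_space x).

Definition annihilator (U : {vspace E}) : {poly E} :=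
  \prod_(u : finvect_type E | (u : E) \in U) ('X - (u : E)%:P).

(* (X^{q^r} - X) + sum_{i=1}^{r-1} beta_i (X^{q^i} - X);
   beta 0 i stands for beta_{i+1} *)
Definition Lpoly (r : nat) (beta : 'rV[E]_(r.-1)) : {poly E} :=
  ('X^(fq ^ r) - 'X) + \sum_(i < r.-1) beta 0 i *: ('X^(fq ^ i.+1) - 'X).

Definition frob (i : nat) (e : E) : E := e ^+ (fq ^ i).

Variables (nk k r D : nat).
Variables (H' : 'M[E]_(nk, k)) (y : 'cV[E]_nk).

(* inputs of Pi^eta held by one party: shares of x_B, beta, a, c *)
Record shares := Shares {
  sx : 'cV[E]_k; sb : 'rV[E]_(r.-1); sa : 'rV[E]_(r.-1); sc : E }.
Definition add_sh (s t : shares) : shares :=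
  Shares (sx s + sx t) (sb s + sb t) (sa s + sa t) (sc s + sc t).
Definition zero_sh : shares := Shares 0 0 0 0.

Definition xA_sh (cst : bool) (s : shares) : 'cV[E]_nk :=
  (if cst then y else 0) - H' *m sx s.
Definition x_sh (cst : bool) (s : shares) : 'cV[E]_(nk + k) :=
  col_mx (xA_sh cst s) (sx s).
Definition z_sh (gam : 'I_(nk + k) -> E) (cst : bool) (s : shares) : E :=
  - \sum_j gam j * (frob r (x_sh cst s j 0) - x_sh cst s j 0).
Definition omega_sh (gam : 'I_(nk + k) -> E) (cst : bool) (s : shares)
  : 'rV[E]_(r.-1) :=
  \row_(i < r.-1) \sum_j gam j * (frob i.+1 (x_sh cst s j 0) - x_sh cst s j 0).
Definition alpha_sh gam (eps : E) cst (s : shares) : 'rV[E]_(r.-1) :=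
  eps *: omega_sh gam cst s + sa s.
Definition dotr (u v : 'rV[E]_(r.-1)) : E := \sum_i u 0 i * v 0 i.
Definition v_sh gam (eps : E) (alpha : 'rV[E]_(r.-1)) cst (s : shares) : E :=
  eps * z_sh gam cst s - dotr alpha (sb s) - sc s.

Definition leaf := (D.-tuple bool)%type.
Definition firstleaf : leaf := [tuple of nseq D false].
Definition lastleaf : leaf := [tuple of nseq D true].

Variables (S C : Type) (Hd : eqType).
Variable G : S -> S * S.                          (* GGM length-doubling PRG *)
Variable expand : S -> shares.
Definition aux := ('cV[E]_k * 'rV[E]_(r.-1) * E)%type. (* correction shares *)
Variable com : S -> option aux -> C.              (* commitment of a leaf state
                                                     (randomness from the seed) *)
Variable hash0 : seq C -> Hd.
Variable hashD : ('rV[E]_(r.-1) * E) -> ('rV[E]_(r.-1) * E) -> Hd.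
Variable hash1 : seq Hd -> Hd.

Definition ggm_step (s : S) (b : bool) : S := if b then (G s).2 else (G s).1.
Definition node_seed (rs : S) (p : seq bool) : S := foldl ggm_step rs p.
Definition sibling_path (rs : S) (istar : leaf) : seq S :=
  [seq node_seed rs (rcons (take d istar) (~~ nth false istar d)) | d <- iota 0 D].
Definition recon_seed (path : seq S) (istar j : leaf) : option S :=
  let d := find (fun i => nth false j i != nth false istar i) (iota 0 D) in
  omap (fun s => foldl ggm_step s (drop d.+1 j)) (onth path d).

Definition leaf_sh (st : S * option aux) : shares :=
  let e := expand st.1 in
  match st.2 with
  | Some (dx, db, dc) => Shares (sx e + dx) (sb e + db) (sa e) (sc e + dc)
  | None => e
  end.

Definition sum_sh (P : pred leaf) (f : leaf -> shares) : shares :=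
  \big[add_sh/zero_sh]_(j | P j) f j.
Definition party (d : 'I_D) (b : bool) : pred leaf := fun j => tnth j d == b.

Section Prover.
Variables (xB : 'cV[E]_k) (beta : 'rV[E]_(r.-1)) (rs : S).

Definition p_seed (j : leaf) : S := node_seed rs j.
Definition p_a : 'rV[E]_(r.-1) := \sum_(j : leaf) sa (expand (p_seed j)).
Definition p_c : E := - dotr beta p_a.
Definition p_aux : aux :=
  (xB - \sum_(j : leaf) sx (expand (p_seed j)),
   beta - \sum_(j : leaf) sb (expand (p_seed j)),
   p_c - \sum_(j : leaf) sc (expand (p_seed j))).
Definition p_state (j : leaf) : S * option aux :=
  (p_seed j, if j == lastleaf then Some p_aux else None).
Definition p_leaf_sh (j : leaf) : shares := leaf_sh (p_state j).

Definition prover_h0 : Hd :=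
  hash0 [seq com (p_state j).1 (p_state j).2 | j <- enum {: leaf}].

Variables (gam : 'I_(nk + k) -> E) (eps : E).
Definition p_main (d : 'I_D) (b : bool) : shares := sum_sh (party d b) p_leaf_sh.
Definition p_alpha_sh (d : 'I_D) (b : bool) := alpha_sh gam eps (~~ b) (p_main d b).
Definition p_alpha (d : 'I_D) := p_alpha_sh d false + p_alpha_sh d true.
Definition p_v_sh (d : 'I_D) (b : bool) := v_sh gam eps (p_alpha d) (~~ b) (p_main d b).
Definition p_H (d : 'I_D) : Hd :=
  hashD (p_alpha_sh d false, p_v_sh d false) (p_alpha_sh d true, p_v_sh d true).
Definition prover_h1 : Hd := hash1 [seq p_H d | d <- enum 'I_D].

Definition response := (seq S * option aux * C * 'rV[E]_(r.-1))%type.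
Definition prover_resp (istar : leaf) : response :=
  (sibling_path rs istar,
   (if istar != lastleaf then Some p_aux else None),
   com (p_state istar).1 (p_state istar).2,
   alpha_sh gam eps (istar == firstleaf) (p_leaf_sh istar)).
End Prover.

Definition verifier (h0 : Hd) (gam : 'I_(nk + k) -> E) (eps : E) (h1 : Hd)
    (istar : leaf) (resp : seq S * option aux * C * 'rV[E]_(r.-1)) : bool :=
  let: (path, auxr, cstar, alphastar) := resp in
  let vstate (j : leaf) : option (S * option aux) :=
    match recon_seed path istar j with
    | Some s => if j == lastleaf then omap (fun a => (s, Some a)) auxr
                else Some (s, None)
    | None => None
    end in
  let coms := [seq (if j == istar then Some cstar
                    else omap (fun st => com st.1 st.2) (vstate j))
              | j <- enum {: leaf}] in
  let vsh (j : leaf) : shares := odflt zero_sh (omap leaf_sh (vstate j)) in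
  let leaf_alpha (j : leaf) : 'rV[E]_(r.-1) :=
    if j == istar then alphastar else alpha_sh gam eps (j == firstleaf) (vsh j) in
  let alpha_main (d : 'I_D) (b : bool) : 'rV[E]_(r.-1) :=
    \sum_(j | party d b j) leaf_alpha j in
  let alpha (d : 'I_D) := alpha_main d false + alpha_main d true in
  let v_open (d : 'I_D) (b : bool) : E :=
    v_sh gam eps (alpha d) (~~ b) (sum_sh (party d b) vsh) in
  (* the main party containing istar gets the v share making v = 0 *)
  let v_main (d : 'I_D) (b : bool) : E :=
    if b == tnth istar d then - v_open d (~~ b) else v_open d b in
  let Hrec (d : 'I_D) : Hd :=
    hashD (alpha_main d false, v_main d false) (alpha_main d true, v_main d true) in
  [&& all isSome coms,
      [forall d1 : 'I_D, [forall d2 : 'I_D, alpha d1 == alpha d2]],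
      hash0 (pmap id coms) == h0 &
      hash1 [seq Hrec d | d <- enum 'I_D] == h1 ].

End RankSD.

(* Main.v *)
Require Import Defs.
From HB Require Import structures.
From mathcomp Require Import all_boot all_order all_algebra all_field ring.
Import Order.TTheory GRing.Theory Num.Theory.
Local Open Scope ring_scope.

Lemma fq_nat (F0 : finFieldType) (E : fieldExtType F0) i :
  [pchar E].-nat (fq F0 ^ i)%N.
Proof.
have [p pr_p chp] := finPcharP F0.
have hc : #|F0| = (p ^ logn p #|F0|)%N.
  exact: (@card_pprimeChar p F0 chp).
rewrite /fq hc -expnM pnatX pnatE // (pchar_lalg E) chp.
by [].
Qed.

Section Alg.
Variables (F0 : finFieldType) (E : fieldExtType F0).
Variables (nk k r : nat) (H' : 'M[E]_(nk, k)) (y : 'cV[E]_nk).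
Variables (gam : 'I_(nk + k) -> E) (eps : E).

Lemma frobD i (a b : E) : frob i (a + b) = frob i a + frob i b.
Proof. by rewrite /frob exprDn_pchar // fq_nat. Qed.
Lemma frob0 i : frob i (0 : E) = 0.
Proof.
have h : (0 < fq F0)%N by rewrite /fq; apply/card_gt0P; exists 0.
by rewrite /frob expr0n expn_eq0 eqn0Ngt h.
Qed.

Local Notation shares := (shares E k r).
Local Notation zero_sh := (@zero_sh F0 E k r).
Local Notation add_sh := (@add_sh F0 E k r).

Definition xg (c : E) (s : shares) : 'cV[E]_(nk + k) :=
  col_mx (c *: y - H' *m sx s) (sx s).
Definition omv (v : 'cV[E]_(nk + k)) : 'rV[E]_(r.-1) :=
  \row_(i < r.-1) \sum_j gam j * (frob i.+1 (v j 0) - v j 0).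
Definition zv (v : 'cV[E]_(nk + k)) : E :=
  - \sum_j gam j * (frob r (v j 0) - v j 0).
Definition alphag c s := eps *: omv (xg c s) + sa s.
Definition vg alpha c s := eps * zv (xg c s) - dotr alpha (sb s) - sc s.

Lemma x_shE cst s : x_sh H' y cst s = xg cst%:R s.
Proof. by rewrite /x_sh /xA_sh /xg; case: cst; rewrite ?scale1r ?scale0r. Qed.

Lemma xgD c1 c2 s1 s2 : xg (c1 + c2) (add_sh s1 s2) = xg c1 s1 + xg c2 s2.
Proof.
rewrite /xg /= add_col_mx; congr col_mx.
by rewrite scalerDl mulmxDr opprD addrACA.
Qed.
Lemma xg0 : xg 0 zero_sh = 0.
Proof. by rewrite /xg /= scale0r mulmx0 subr0 col_mx0. Qed.

Lemma omvD v w : omv (v + w) = omv v + omv w.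
Proof.
apply/rowP=> i; rewrite !mxE -big_split; apply: eq_bigr => j _.
rewrite !mxE frobD /=; ring.
Qed.
Lemma omv0 : omv 0 = 0.
Proof.
apply/rowP=> i; rewrite !mxE big1 // => j _.
by rewrite mxE frob0 subrr mulr0.
Qed.
Lemma zvD v w : zv (v + w) = zv v + zv w.
Proof.
rewrite /zv -opprD -big_split; congr (- _); apply: eq_bigr => j _.
rewrite !mxE frobD /=; ring.
Qed.
Lemma zv0 : zv 0 = 0.
Proof. by rewrite /zv big1 ?oppr0 // => j _; rewrite mxE frob0 subrr mulr0. Qed.

Lemma dotrDr (a u v : 'rV[E]_(r.-1)) : dotr a (u + v) = dotr a u + dotr a v.
Proof. by rewrite /dotr -big_split; apply: eq_bigr => i _; rewrite mxE mulrDr. Qed.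
Lemma dotrDl (a u v : 'rV[E]_(r.-1)) : dotr (u + v) a = dotr u a + dotr v a.
Proof. by rewrite /dotr -big_split; apply: eq_bigr => i _; rewrite mxE mulrDl. Qed.
Lemma dotrZl (c : E) (u v : 'rV[E]_(r.-1)) : dotr (c *: u) v = c * dotr u v.
Proof. by rewrite /dotr mulr_sumr; apply: eq_bigr => i _; rewrite mxE mulrA. Qed.
Lemma dotrC (u v : 'rV[E]_(r.-1)) : dotr u v = dotr v u.
Proof. by rewrite /dotr; apply: eq_bigr => i _; rewrite mulrC. Qed.
Lemma dotr0 (a : 'rV[E]_(r.-1)) : dotr a 0 = 0.
Proof. by rewrite /dotr big1 // => i _; rewrite mxE mulr0. Qed.

Lemma alphagD c1 c2 s1 s2 :
  alphag (c1 + c2) (add_sh s1 s2) = alphag c1 s1 + alphag c2 s2.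
Proof. by rewrite /alphag xgD omvD scalerDr /= addrACA. Qed.
Lemma alphag0 : alphag 0 zero_sh = 0.
Proof. by rewrite /alphag xg0 omv0 scaler0 addr0. Qed.
Lemma vgD (a : 'rV[E]_(r.-1)) c1 c2 s1 s2 : vg a (c1 + c2) (add_sh s1 s2) = vg a c1 s1 + vg a c2 s2.
Proof. rewrite /vg xgD zvD /= dotrDr; ring. Qed.
Lemma vg0 (a : 'rV[E]_(r.-1)) : vg a 0 zero_sh = 0.
Proof. by rewrite /vg xg0 zv0 /= dotr0 mulr0 !subr0. Qed.

Lemma alpha_shE cst s : alpha_sh H' y gam eps cst s = alphag cst%:R s.
Proof. by rewrite /alpha_sh /alphag /omega_sh x_shE. Qed.
Lemma v_shE (a : 'rV[E]_(r.-1)) cst s : v_sh H' y gam eps a cst s = vg a cst%:R s.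
Proof. by rewrite /v_sh /vg /z_sh x_shE. Qed.

Lemma big_sh_morph (I : Type) (T : zmodType) (f : E -> shares -> T)
  (fD : forall c1 c2 s1 s2, f (c1 + c2) (add_sh s1 s2) = f c1 s1 + f c2 s2)
  (f0 : f 0 zero_sh = 0) (rr : seq I) (P : pred I) c s :
  \sum_(j <- rr | P j) f (c j) (s j) =
  f (\sum_(j <- rr | P j) c j) (\big[add_sh/zero_sh]_(j <- rr | P j) s j).
Proof.
elim/big_rec3: _ => [|j a b d _ ->]; first by rewrite f0.
by rewrite fD.
Qed.


Lemma Lpoly_horner (beta : 'rV[E]_(r.-1)) e :
  (Lpoly beta).[e] = (frob r e - e) + \sum_(i < r.-1) beta 0 i * (frob i.+1 e - e).
Proof.
rewrite /Lpoly hornerD horner_sum hornerD hornerN hornerXn hornerX /frob.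
congr (_ + _); apply: eq_bigr => i _.
by rewrite hornerZ hornerD hornerN hornerXn hornerX.
Qed.

Lemma zv_omv (v : 'cV[E]_(nk + k)) (beta : 'rV[E]_(r.-1)) :
  (forall j, (Lpoly beta).[v j 0] = 0) -> zv v = dotr (omv v) beta.
Proof.
move=> hL.
rewrite /dotr /zv /omv.
rewrite (eq_bigr (fun i : 'I_r.-1 => \sum_j gam j * (frob i.+1 (v j 0) - v j 0) * beta 0 i)); last first.
  by move=> i _; rewrite mxE mulr_suml.
rewrite exchange_big /= -sumrN; apply: eq_bigr => j _.
have := hL j; rewrite Lpoly_horner => /eqP; rewrite addr_eq0 => /eqP ->.
rewrite mulrN opprK mulr_sumr; apply: eq_bigr => i _.
by rewrite /=; ring.
Qed.

End Alg.
Arguments xg {F0 E nk k r}.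
Arguments omv {F0 E nk k r}.
Arguments zv {F0 E nk k r}.
Arguments alphag {F0 E nk k r}.
Arguments vg {F0 E nk k r}.


Lemma recon_ok (S : Type) (G : S -> S * S) (D : nat) (rs : S) (istar j : leaf D) :
  j != istar -> recon_seed G (sibling_path G rs istar) istar j = Some (node_seed G rs j).
Proof.
move=> hne.
set a := (fun i => nth false j i != nth false istar i).
have hex : has a (iota 0 D).
  apply/negPn/negP => /hasPn h; apply: (negP hne); apply/eqP/val_inj.
  apply: (eq_from_nth (x0:=false)); first by rewrite !size_tuple.
  move=> i; rewrite size_tuple => hi; have := h i; rewrite mem_iota /= hi.
  by move=> /(_ isT) /negPn /eqP.
rewrite /recon_seed -/a.
set d := find a (iota 0 D).
have hd : (d < D)%N by rewrite -[X in (_ < X)%N](size_iota 0 D) -has_find.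
have hnd := nth_find 0%N hex; rewrite -/d /a nth_iota // add0n in hnd.
have hbd : forall i, (i < d)%N -> nth false j i = nth false istar i.
  move=> i hi; have := before_find 0%N hi; rewrite /a nth_iota ?add0n.
    by move/negbT/negPn/eqP.
  exact: ltn_trans hd.
rewrite /sibling_path onthE -map_comp (nth_map 0%N) ?size_iota // nth_iota //= add0n.
rewrite /node_seed -foldl_cat; congr (Some (foldl _ _ _)).
have -> : ~~ nth false istar d = nth false j d by move: hnd; case: (nth false j d); case: (nth false istar d).
have -> : take d istar = take d j.
  apply: (eq_from_nth (x0:=false)); first by rewrite !size_take !size_tuple.
  move=> i; rewrite size_take size_tuple hd => hi.
  by rewrite !nth_take // hbd.
by rewrite -take_nth ?size_tuple // cat_take_drop.
Qed.

Section Proto.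
Variables (F0 : finFieldType) (E : fieldExtType F0).
Variables (nk k r D : nat) (H' : 'M[E]_(nk, k)) (y : 'cV[E]_nk).
Variables (gam : 'I_(nk + k) -> E) (eps : E).
Variables (S : Type) (G : S -> S * S) (expand : S -> shares E k r).
Variables (xB : 'cV[E]_k) (beta : 'rV[E]_(r.-1)) (rs : S).

Local Notation shares := (shares E k r).
Local Notation zero_sh := (@zero_sh F0 E k r).
Local Notation add_sh := (@add_sh F0 E k r).
Local Notation sx := (@sx F0 E k r).
Local Notation sb := (@sb F0 E k r).
Local Notation sa := (@sa F0 E k r).
Local Notation sc := (@sc F0 E k r).
Local Notation sum_sh := (@sum_sh F0 E k r D).
Local Notation pls := (p_leaf_sh (D:=D) G expand xB beta rs).
Local Notation ex := (fun j : leaf D => expand (p_seed G rs j)).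

Lemma sh_eq (s t : shares) :
  sx s = sx t -> sb s = sb t -> sa s = sa t -> sc s = sc t -> s = t.
Proof. by case: s => ????; case: t => ???? /= -> -> -> ->. Qed.

Lemma sx_sum P f : sx (sum_sh P f) = \sum_(j | P j) sx (f j).
Proof. by rewrite /Defs.sum_sh; elim/big_rec2: _ => //= j a b _ ->. Qed.
Lemma sb_sum P f : sb (sum_sh P f) = \sum_(j | P j) sb (f j).
Proof. by rewrite /Defs.sum_sh; elim/big_rec2: _ => //= j a b _ ->. Qed.
Lemma sa_sum P f : sa (sum_sh P f) = \sum_(j | P j) sa (f j).
Proof. by rewrite /Defs.sum_sh; elim/big_rec2: _ => //= j a b _ ->. Qed.
Lemma sc_sum P f : sc (sum_sh P f) = \sum_(j | P j) sc (f j).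
Proof. by rewrite /Defs.sum_sh; elim/big_rec2: _ => //= j a b _ ->. Qed.

Lemma split_party (V : zmodType) (F : leaf D -> V) d :
  \sum_(j | party d false j) F j + \sum_(j | party d true j) F j = \sum_j F j.
Proof.
rewrite [RHS](bigID (party d false)) /=; congr (_ + _).
by apply: eq_bigl => j; rewrite /party; case: (tnth j d).
Qed.

Lemma sh_split f d :
  add_sh (sum_sh (party d false) f) (sum_sh (party d true) f) = sum_sh predT f.
Proof.
by apply: sh_eq; rewrite /= ?sx_sum ?sb_sum ?sa_sum ?sc_sum split_party.
Qed.

Lemma pls_other j : j != lastleaf D -> pls j = ex j.
Proof. by move=> hj; rewrite /p_leaf_sh /p_state (negbTE hj). Qed.
Lemma pls_last : pls (lastleaf D) =
  let e := ex (lastleaf D) in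
  let: (dx, db, dc) := p_aux D G expand xB beta rs in
  Shares (sx e + dx) (sb e + db) (sa e) (sc e + dc).
Proof. by rewrite /p_leaf_sh /p_state eqxx. Qed.

Lemma sum_corr (V : zmodType) (proj : shares -> V) (delta : V) :
  proj (pls (lastleaf D)) = proj (ex (lastleaf D)) + delta ->
  \sum_j proj (pls j) = \sum_j proj (ex j) + delta.
Proof.
move=> hl; rewrite (bigD1 (lastleaf D)) //= hl [in RHS](bigD1 (lastleaf D)) //=.
rewrite -!addrA; congr (_ + _); rewrite addrC; congr (_ + _).
by apply: eq_bigr => j hj; rewrite pls_other.
Qed.

Definition sall : shares :=
  Shares xB beta (p_a D G expand rs) (p_c D G expand beta rs).

Lemma sum_all : sum_sh predT pls = sall.
Proof.
apply: sh_eq; rewrite /= ?sx_sum ?sb_sum ?sa_sum ?sc_sum.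
- rewrite (@sum_corr _ sx (xB - \sum_j sx (ex j))); first by rewrite addrC subrK.
  by rewrite /p_leaf_sh /p_state eqxx /p_aux.
- rewrite (@sum_corr _ sb (beta - \sum_j sb (ex j))); first by rewrite addrC subrK.
  by rewrite /p_leaf_sh /p_state eqxx /p_aux.
- rewrite (@sum_corr _ sa 0); first by rewrite addr0.
  by rewrite /p_leaf_sh /p_state eqxx /p_aux /= addr0.
- rewrite (@sum_corr _ sc (p_c D G expand beta rs - \sum_j sc (ex j))); first by rewrite addrC subrK.
  by rewrite /p_leaf_sh /p_state eqxx /p_aux.
Qed.

Lemma main_split (d : 'I_D) : add_sh (p_main G expand xB beta rs d false) (p_main G expand xB beta rs d true) = sall.
Proof. by rewrite /p_main sh_split sum_all. Qed.

Lemma palpha_all (d : 'I_D) :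
  p_alpha H' y G expand xB beta rs gam eps d = alphag H' y gam eps 1 sall.
Proof.
rewrite /p_alpha /p_alpha_sh !alpha_shE -alphagD main_split /=.
by rewrite addr0.
Qed.

Lemma pv_sum (d : 'I_D) :
  p_v_sh H' y G expand xB beta rs gam eps d false + p_v_sh H' y G expand xB beta rs gam eps d true
  = vg H' y gam eps (p_alpha H' y G expand xB beta rs gam eps d) 1 sall.
Proof.
rewrite /p_v_sh !v_shE -vgD main_split /=.
by rewrite addr0.
Qed.

Lemma count_first (d : 'I_D) b :
  \sum_(j | party d b j) ((j == firstleaf D)%:R : E) = (~~ b)%:R.
Proof.
rewrite big_mkcond (bigD1 (firstleaf D)) //= big1 ?addr0.
  by rewrite /party /firstleaf tnth_nseq eqxx; case: b.
by move=> j /negbTE ->; case: ifP.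
Qed.

Lemma alpha_main_ok (d : 'I_D) b :
  \sum_(j | party d b j) alpha_sh H' y gam eps (j == firstleaf D) (pls j)
  = p_alpha_sh H' y G expand xB beta rs gam eps d b.
Proof.
rewrite /p_alpha_sh alpha_shE.
under eq_bigr => j _ do rewrite alpha_shE.
have hD := @alphagD F0 E nk k r H' y gam eps.
have h0 := @alphag0 F0 E nk k r H' y gam eps.
by rewrite (@big_sh_morph F0 E k r _ _ _ hD h0) count_first.
Qed.

Variable istar : leaf D.

Lemma vstate_ok j : j != istar ->
  match recon_seed G (sibling_path G rs istar) istar j with
  | Some s => if j == lastleaf D
              then omap (fun a : aux E k r => (s, Some a))
                     (if istar != lastleaf D then Some (p_aux D G expand xB beta rs) else None)
              else Some (s, None)
  | None => None
  end = Some (p_state G expand xB beta rs j).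
Proof.
move=> hne; rewrite recon_ok // /p_state /p_seed.
case: (eqVneq j (lastleaf D)) => [hj|hj] //=.
by move: hne; rewrite hj eq_sym => ->.
Qed.

Lemma leaf_alpha_ok j :
  (if j == istar then alpha_sh H' y gam eps (istar == firstleaf D) (pls istar)
   else alpha_sh H' y gam eps (j == firstleaf D)
     (odflt zero_sh (omap (leaf_sh expand)
       match recon_seed G (sibling_path G rs istar) istar j with
       | Some s => if j == lastleaf D
              then omap (fun a : aux E k r => (s, Some a))
                     (if istar != lastleaf D then Some (p_aux D G expand xB beta rs) else None)
              else Some (s, None)
       | None => None
       end)))
  = alpha_sh H' y gam eps (j == firstleaf D) (pls j).
Proof.
case: eqP => [->//|/eqP hne].
by rewrite vstate_ok.
Qed.

Lemma vsh_ok j : j != istar ->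
     (odflt zero_sh (omap (leaf_sh expand)
       match recon_seed G (sibling_path G rs istar) istar j with
       | Some s => if j == lastleaf D
              then omap (fun a : aux E k r => (s, Some a))
                     (if istar != lastleaf D then Some (p_aux D G expand xB beta rs) else None)
              else Some (s, None)
       | None => None
       end)) = pls j.
Proof. by move=> hne; rewrite vstate_ok. Qed.

End Proto.
Theorem theorem1
  (F0 : finFieldType) (E : fieldExtType F0) (m eta : nat)
  (K : {subfield E})
  (hm : (0 < m)%N) (heta : (0 < eta)%N)
  (hK : \dim K = m) (hE : \dim {: E}%VS = (m * eta)%N)
  (nk k r : nat) (hnk : (0 < nk)%N) (hk : (0 < k)%N) (hr : (0 < r)%N)
  (H' : 'M[E]_(nk, k)) (y : 'cV[E]_nk)
  (hH' : forall i j, H' i j \in K) (hy : forall i, y i ord0 \in K)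
  (x : 'cV[E]_(nk + k)) (hx : forall i, x i ord0 \in K)
  (hHx : row_mx 1%:M H' *m x = y)
  (hW : (rank_weight x <= r)%N)
  (h1U : 1 \in supp_space x) (hdimU : \dim (supp_space x) = r)
  (beta : 'rV[E]_(r.-1)) (hbeta : annihilator (supp_space x) = Lpoly beta)
  (D : nat) (S C : Type) (Hd : eqType)
  (G : S -> S * S) (expand : S -> shares E k r)
  (com : S -> option (aux E k r) -> C)
  (hash0 : seq C -> Hd)
  (hashD : ('rV[E]_(r.-1) * E) -> ('rV[E]_(r.-1) * E) -> Hd)
  (hash1 : seq Hd -> Hd)
  (rs : S) (gam : 'I_(nk + k) -> E) (eps : E) (istar : leaf D) :
  let xB := dsubmx x in
  verifier H' y G expand com hash0 hashD hash1
    (prover_h0 D G expand com hash0 xB beta rs)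
    gam eps
    (prover_h1 D H' y G expand hashD hash1 xB beta rs gam eps)
    istar
    (prover_resp H' y G expand com xB beta rs gam eps istar) = true.
Proof.
move=> xB.
set sA := @sall F0 E k r D S G expand xB beta rs.
have hx1 : xg H' y 1 sA = x.
  rewrite /xg /sA /= scale1r.
  have hu : usubmx x = y - H' *m dsubmx x.
    by rewrite -hHx -[x in row_mx _ _ *m x](vsubmxK x) mul_row_col mul1mx addrK.
  by rewrite /xB -hu vsubmxK.
have hL : forall j, (Lpoly beta).[x j 0] = 0.
  move=> j; rewrite -hbeta /annihilator horner_prod.
  have hj : x j 0 \in supp_space x.
    apply: memv_span; apply/mapP; exists j; first by rewrite mem_enum.
    by congr (x j _); apply/val_inj.
  rewrite (bigD1 (x j 0 : finvect_type E)) //= hornerXsubC subrr mul0r //.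
have hzv := @zv_omv _ _ _ _ _ gam x beta hL.
have hv0 : forall d : 'I_D, p_v_sh H' y G expand xB beta rs gam eps d false
   + p_v_sh H' y G expand xB beta rs gam eps d true = 0.
  move=> d; rewrite pv_sum palpha_all /vg /alphag -/sA hx1 hzv /sA /p_c.
  rewrite [sb _]/= [sc _]/= dotrDl dotrZl /= /p_c dotrC.
  by rewrite opprK [dotr (p_a _ _ _ _) _]dotrC; ring.
unfold verifier, prover_resp.
apply/and4P; split.
- rewrite all_map; apply/allP => j _ /=; case: eqP => [_|/eqP hne] //.
  by rewrite vstate_ok.
- apply/forallP => d1; apply/forallP => d2; apply/eqP.
  by rewrite !split_party.
- apply/eqP; rewrite /prover_h0; congr hash0.
  rewrite (@eq_map _ _ _ (fun j => Some (com (p_state (D:=D) G expand xB beta rs j).1 (p_state (D:=D) G expand xB beta rs j).2))); last first.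
    move=> j /=; case: eqP => [->//|/eqP hne]; by rewrite vstate_ok.
  by elim: (enum _) => //= j s ->.
- apply/eqP; rewrite /prover_h1; congr hash1; apply: eq_map => d.
  rewrite (eq_bigr _ (fun j _ => @leaf_alpha_ok _ _ _ _ _ _ H' y gam eps _ G expand xB beta rs istar j)).
  rewrite (eq_bigr _ (fun j _ => @leaf_alpha_ok _ _ _ _ _ _ H' y gam eps _ G expand xB beta rs istar j)).
  rewrite !alpha_main_ok /p_H.
  have hv1 := hv0 d.
  case hb: (tnth istar d) => /=; rewrite /sum_sh.
  + rewrite (@eq_bigr _ _ _ _ _ _ _ (fun j => p_leaf_sh G expand xB beta rs j)); last first.
      by move=> j hj; apply: vsh_ok; apply: contraTneq hj => ->; rewrite /party hb.
    have -> : p_v_sh H' y G expand xB beta rs gam eps d true = - p_v_sh H' y G expand xB beta rs gam eps d false.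
      by apply/eqP; rewrite -addr_eq0 addrC hv1.
    by [].
  + rewrite (@eq_bigr _ _ _ _ _ _ _ (fun j => p_leaf_sh G expand xB beta rs j)); last first.
      by move=> j hj; apply: vsh_ok; apply: contraTneq hj => ->; rewrite /party hb.
    have -> : p_v_sh H' y G expand xB beta rs gam eps d false = - p_v_sh H' y G expand xB beta rs gam eps d true.
      by apply/eqP; rewrite -addr_eq0 hv1.
    by [].

Qed.
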